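(* In the setting described in the context, for any slot allocation $\tau$ of the slot set $\Lambda$, the associated service placement $X^\tau$ is feasible, i.e. $\sum_{i\in S}s_i\mathbf 1[j\in X^\tau_i]\le c_j$ for all $j\in V$.
   Context: An SPSC instance: finite sets $S$ (services), $V$ (nodes), $U$ (users); sizes $s_i>0$; capacities $c_j>0$; for each user $k$ a service $i_k\in S$, a set $T_k\subseteq V$, a reward $w_k>0$. A service placement $X=\{X_i\subseteq V:i\in S\}$ is feasible iff $\sum_is_i\mathbf 1[j\in X_i]\le c_j$ for all $j$. Let $\{x_{ij}\},\{y_k\}$ be an optimal solution of the LP with nonnegative variables: maximize $\sum_ky_kw_k$ s.t. $y_k\le\sum_{j\in T_k}x_{i_kj}$, $y_k\le1$; $\sum_ix_{ij}s_i\le c_j$; $x_{ij}=0$ if $s_i>c_j$; $0\le x_{ij}\le1$. Fix $\beta<1$ with $\max_is_i\le\beta\min_jc_j$; $\gamma:=1-\sqrt\beta$, $\delta:=(1-\sqrt\beta)^2$, $\mathbb N=\{1,2,\dots\}$. For $j\in V,q\in\mathbb N$: $P_j^q:=\{i\in S:\gamma^qc_j\beta<s_i\le\gamma^{q-1}c_j\beta\}$, $d_j^q:=\sum_{i\in P_j^q}x_{ij}$, $v_j:=\delta c_j/\sum_{i\in S}s_ix_{ij}$, $n_j^q:=\lceil v_jd_j^q\rceil$. The slot set $\Lambda$: for every $j,q$ with $P_j^q\ne\emptyset$ create $n_j^q$ slots $\sigma$ with node $\nu(\sigma)=j$ and class $\kappa(\sigma)=q$. A slot allocation is $\tau:\Lambda\to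 S$ with $\tau(\sigma)\in P^{\kappa(\sigma)}_{\nu(\sigma)}$; its associated placement is $X^\tau_i:=\{j\in V:\exists\sigma\in\Lambda,\ \nu(\sigma)=j,\ \tau(\sigma)=i\}$. *)

(* Defs.v *)
From HB Require Import structures.
From mathcomp Require Import all_boot all_order all_algebra.
From mathcomp Require Import reals.
Set Implicit Arguments. Unset Strict Implicit. Unset Printing Implicit Defensive.
Import Order.TTheory GRing.Theory Num.Theory.
Local Open Scope ring_scope.

Section SPSC.
Variables (R : realType) (S V U : finType).
Variables (s : S -> R) (c : V -> R) (iu : U -> S) (T : U -> {set V}) (w : U -> R).

Definition lp_feasible (x : S -> V -> R) (y : U -> R) : Prop :=
  [/\ (forall i j, 0 <= x i j /\ x i j <= 1),
      (forall k, 0 <= y k /\ y k <= 1),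
      (forall k, y k <= \sum_(j in T k) x (iu k) j),
      (forall j, \sum_i x i j * s i <= c j) &
      (forall i j, c j < s i -> x i j = 0)].

Definition lp_objective (y : U -> R) : R := \sum_k y k * w k.

Definition lp_optimal (x : S -> V -> R) (y : U -> R) : Prop :=
  lp_feasible x y /\
  forall x' y', lp_feasible x' y' -> lp_objective y' <= lp_objective y.

Variables (x : S -> V -> R) (beta : R).

Definition gamma : R := 1 - Num.sqrt beta.
Definition delta : R := (1 - Num.sqrt beta) ^+ 2.

Definition Pclass (j : V) (q : nat) : {set S} :=
  [set i | (gamma ^+ q * c j * beta < s i) && (s i <= gamma ^+ q.-1 * c j * beta)].

Definition dval (j : V) (q : nat) : R := \sum_(i in Pclass j q) x i j.

(* v_j := delta c_j / sum_i s_i x_ij  (MathComp convention: a / 0 = 0) *)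
Definition vval (j : V) : R := delta * c j / (\sum_i s i * x i j).

Definition nslots (j : V) (q : nat) : int := Num.ceil (vval j * dval j q).

(* slots are encoded as triples (j, q, k): the k-th slot (k < n_j^q) of node j,
   class q, created only when q \in N = {1,2,...} and P_j^q is nonempty *)
Definition is_slot (j : V) (q k : nat) : bool :=
  [&& (1 <= q)%N, Pclass j q != set0 & (k%:Z < nslots j q)].

Definition slot_allocation (tau : V -> nat -> nat -> S) : Prop :=
  forall j q k, is_slot j q k -> tau j q k \in Pclass j q.

Definition placement_of (tau : V -> nat -> nat -> S) (i : S) (j : V) : Prop :=
  exists q k, is_slot j q k /\ tau j q k = i.

End SPSC.

(* feasibility of a placement given as a relation X i j ("j \in X_i"):
   for every node j, sum_i s_i 1[j \in X_i] <= c_j.  The set {i | j \in X_i}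
   is given as a finset A characterized extensionally (no classical choice). *)
Definition feasible_placement (R : realType) (S V : finType)
  (s : S -> R) (c : V -> R) (X : S -> V -> Prop) : Prop :=
  forall j : V, forall A : {set S}, (forall i, i \in A <-> X i j) ->
    \sum_(i in A) s i <= c j.

(* Main.v *)
Require Import Defs.
From HB Require Import structures.
From mathcomp Require Import all_boot all_order all_algebra.
From mathcomp Require Import reals.
From mathcomp Require Import ring lra zify.
Import Order.TTheory GRing.Theory Num.Theory.
Local Open Scope ring_scope.

Lemma bound_seq (S : eqType) (r : seq S) (P : S -> nat -> Prop) :
  (forall i, i \in r -> exists q, P i q) ->
  exists M, forall i, i \in r -> exists2 q, (q <= M)%N & P i q.
Proof.
elim: r => [|a r IH] H; first by exists 0%N.
have [qa Pa] := H a (mem_head a r).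
have [M HM] : exists M, forall i, i \in r -> exists2 q, (q <= M)%N & P i q.
  by apply: IH => i ir; apply: H; rewrite in_cons ir orbT.
exists (maxn qa M) => i; rewrite in_cons => /orP [/eqP ->|ir].
  by exists qa => //; rewrite leq_maxl.
have [q qM Pq] := HM i ir; exists q => //; apply: leq_trans qM (leq_maxr _ _).
Qed.

Lemma geo (R : numFieldType) (g : R) (M : nat) :
  (\sum_(0 <= q < M) g ^+ q) * (1 - g) = 1 - g ^+ M.
Proof.
elim: M => [|M IH]; first by rewrite big_geq // mul0r expr0 subrr.
rewrite big_nat_recr //= mulrDl IH exprS; ring.
Qed.

Lemma sum_atmost1 (R : numDomainType) (r : seq nat) (p : pred nat) (f : R) :
  uniq r -> (forall a b, p a -> p b -> a = b) -> 0 <= f ->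
  \sum_(q <- r | p q) f <= f.
Proof.
move=> ur hp f0; rewrite -big_filter.
have : uniq (filter p r) by rewrite filter_uniq.
have : forall a, a \in filter p r -> p a by move=> a; rewrite mem_filter => /andP[].
case: (filter p r) => [|a [|b t]] Hp Hu.
- by rewrite big_nil.
- by rewrite big_seq1.
- exfalso; have ab : a = b by apply: hp; apply: Hp; rewrite !inE eqxx ?orbT.
  by move: Hu; rewrite /= ab in_cons eqxx.
Qed.

Theorem theorem4 (R : realType) (S V U : finType)
  (s : S -> R) (c : V -> R) (iu : U -> S) (T : U -> {set V}) (w : U -> R)
  (hs : forall i, 0 < s i) (hc : forall j, 0 < c j) (hw : forall k, 0 < w k)
  (x : S -> V -> R) (y : U -> R)
  (hopt : lp_optimal s c iu T w x y)
  (beta : R) (hbeta1 : beta < 1) (hbeta : forall i j, s i <= beta * c j)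
  (tau : V -> nat -> nat -> S)
  (htau : slot_allocation s c x beta tau) :
  feasible_placement s c (placement_of s c x beta tau).
Proof.
have [[xpos _ _ _ _] _] := hopt.
have x0 : forall i j, 0 <= x i j by move=> i j; case: (xpos i j).
move=> j A HA.
have [->|[i0 i0A]] := set_0Vmem A; first by rewrite big_set0 ltW.
have cj := hc j.
have bpos : 0 < beta.
  have := lt_le_trans (hs i0) (hbeta i0 j).
  by rewrite pmulr_lgt0.
set sb := Num.sqrt beta.
have sb0 : 0 < sb by rewrite sqrtr_gt0.
have sb1 : sb < 1 by rewrite -(sqrtr1 R) ltr_sqrt.
have sbsq : sb ^+ 2 = beta by rewrite sqr_sqrtr // ltW.
set g := gamma beta.
have gE : g = 1 - sb by [].
have g0 : 0 < g by rewrite gE subr_gt0.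
have g1 : g <= 1 by rewrite gE lerBlDr lerDl ltW.
have dE : delta beta = g ^+ 2 by [].
set cb := c j * beta.
have cb0 : 0 < cb by rewrite mulr_gt0.
set P := Pclass s c beta j.
have Pdef : forall i q, (i \in P q) = (g ^+ q * cb < s i) && (s i <= g ^+ q.-1 * cb).
  by move=> i q; rewrite /P /Pclass inE -!mulrA.
have Puniq : forall i q1 q2, i \in P q1 -> i \in P q2 -> q1 = q2.
  suff H : forall i q1 q2, (q1 < q2)%N -> i \in P q1 -> i \in P q2 -> False.
    move=> i q1 q2 h1 h2; case: (ltngtP q1 q2) => // h.
    - by case: (H _ _ _ h h1 h2).
    - by case: (H _ _ _ h h2 h1).
  move=> i q1 q2 lt12; rewrite !Pdef => /andP[a1 _] /andP[_ b2].
  have : g ^+ q2.-1 <= g ^+ q1 by apply: ler_wiXn2l; [exact: ltW | | rewrite -ltnS (ltn_predK lt12)].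
  move=> hle; have := ler_wpM2r (ltW cb0) hle => hle2.
  have := lt_le_trans a1 (le_trans b2 hle2); by rewrite ltxx.
have Hw : forall i, i \in enum A -> exists q, [/\ (1 <= q)%N, i \in P q &
              exists k, is_slot s c x beta j q k /\ tau j q k = i].
  move=> i; rewrite mem_enum => /HA [q [k [hsl htk]]].
  exists q; split.
  - by case/and3P: hsl.
  - by rewrite -htk; apply: htau.
  - by exists k.
have [M HM] := @bound_seq _ (enum A) _ Hw.
have E : \sum_(i in A) s i = \sum_(1 <= q < M.+1) \sum_(i | (i \in A) && (i \in P q)) s i.
  rewrite (exchange_big_dep (fun _ => true)) //=.
  rewrite [LHS]big_mkcond; apply: eq_bigr => i _.
  case: ifP => iA; last by rewrite big1 // => q /andP[_ /andP[]]; rewrite iA.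
  have iA' : i \in enum A by rewrite mem_enum.
  have [q qM [q1 iP _]] := HM i iA'.
  rewrite big_mkcond (bigD1_seq q) /=; first last.
  - by rewrite iota_uniq.
  - by rewrite mem_index_iota q1 ltnS qM.
  rewrite iP big1 ?addr0 // => q' nq'; case: ifP => // iP'.
  by move: nq'; rewrite (Puniq _ _ _ iP iP') eqxx.
set Y := \sum_i s i * x i j.
have Y0 : 0 <= Y by apply: sumr_ge0 => i _; rewrite mulr_ge0 // ltW.
set v := vval s c x beta j.
have v0 : 0 <= v.
  rewrite /v /vval divr_ge0 // mulr_ge0 ?(ltW cj) // dE; exact: sqr_ge0.
set d := dval s c x beta j.
have d0 : forall q, 0 <= d q by move=> q; apply: sumr_ge0.
have St1 : forall q, (1 <= q)%N ->
    \sum_(i | (i \in A) && (i \in P q)) s i <= (v * d q + 1) * (g ^+ q.-1 * cb).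
  move=> q q1.
  set B := [set i | (i \in A) && (i \in P q)].
  have -> : \sum_(i | (i \in A) && (i \in P q)) s i = \sum_(i in B) s i.
    by apply: eq_bigl => i; rewrite /B in_set.
  apply: (@le_trans _ _ (\sum_(i in B) (g ^+ q.-1 * cb))).
    apply: ler_sum => i; rewrite inE => /andP[_]; rewrite Pdef => /andP[_ ->] //.
  rewrite sumr_const -mulr_natl; apply: ler_wpM2r.
    by apply: mulr_ge0; [apply: exprn_ge0; exact: ltW | exact: ltW].
  set n := nslots s c x beta j q.
  have n0 : (0 <= n)%R.
    rewrite /n /nslots ceil_ge0; apply: lt_le_trans (mulr_ge0 v0 (d0 q)).
    by rewrite ltrN10.
  have cardB : (#|B| <= `|n|)%N.
    apply: (@leq_trans #|[set tau j q (val k) | k : 'I_`|n|%N]|); last first.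
      by apply: leq_trans (leq_imset_card _ _) _; rewrite card_ord.
    apply: subset_leq_card; apply/subsetP => i; rewrite inE => /andP[iA iP].
    have [q' [k [hsl htk]]] := (HA i).1 iA.
    have iP' : i \in P q' by rewrite -htk; apply: htau.
    have eq' := Puniq _ _ _ iP iP'; subst q'.
    case/and3P: hsl => _ _ kn.
    have kn' : (k < `|n|)%N by rewrite -ltz_nat gez0_abs.
    by apply/imsetP; exists (Ordinal kn') => //.
  apply: (@le_trans _ _ (`|n|%N)%:R); first by rewrite ler_nat.
  rewrite natr_absz ger0_norm //.
  have := ceilB1_lt (v * d q); rewrite -/n intrD => h.
  by rewrite -(subrK 1 (n%:~R)) lerD2r ltW.
have St3 : \sum_(1 <= q < M.+1) d q * (g ^+ q.-1 * cb) <= Y / g.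
  apply: (@le_trans _ _ (\sum_(1 <= q < M.+1) \sum_(i in P q) x i j * (s i / g))).
    apply: ler_sum_nat => q /andP[q1 _].
    rewrite /d /dval mulr_suml; apply: ler_sum => i iP.
    apply: ler_wpM2l => //; rewrite ler_pdivlMr //.
    move: iP; rewrite Pdef => /andP[h _]; apply: ltW.
    by rewrite mulrC mulrA -exprS prednK.
  rewrite (exchange_big_dep (fun _ => true)) //=.
  rewrite /Y mulr_suml; apply: ler_sum => i _.
  have -> : s i * x i j / g = x i j * (s i / g) by rewrite mulrCA mulrA.
  apply: sum_atmost1.
  - exact: iota_uniq.
  - by move=> a b /Puniq; apply.
  - by rewrite mulr_ge0 // divr_ge0 // ltW.
have St1' : \sum_(1 <= q < M.+1) \sum_(i | (i \in A) && (i \in P q)) s i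
    <= \sum_(1 <= q < M.+1) (v * d q + 1) * (g ^+ q.-1 * cb).
  by apply: ler_sum_nat => q /andP[q1 _]; exact: St1.
rewrite E; apply: le_trans St1' _.
under eq_bigr => q _ do rewrite mulrDl mul1r -mulrA.
rewrite big_split /= -mulr_sumr.
have S4 : v * \sum_(1 <= q < M.+1) d q * (g ^+ q.-1 * cb) <= g * c j.
  apply: le_trans (ler_wpM2l v0 St3) _.
  rewrite /v /vval -/Y dE.
  case: (eqVneq Y 0) => [->|Yn0].
    by rewrite mul0r mulr0; apply: mulr_ge0; apply: ltW.
  have gn0 : g != 0 by rewrite gt_eqF.
  have -> : g ^+ 2 * c j / Y * (Y / g) = g * c j.
    by field; rewrite gn0 Yn0.
  by [].
have S5 : \sum_(1 <= q < M.+1) g ^+ q.-1 * cb <= sb * c j.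
  rewrite -mulr_suml.
  have -> : \sum_(1 <= q < M.+1) g ^+ q.-1 = \sum_(0 <= q < M) g ^+ q.
    by rewrite big_add1 /=.
  have HG := @geo _ g M.
  set G := \sum_(0 <= q < M) g ^+ q in HG *.
  have e : 1 - g = sb by rewrite gE; ring.
  rewrite e in HG.
  have -> : G * cb = c j * sb * (G * sb) by rewrite /cb -sbsq; ring.
  rewrite HG.
  have -> : c j * sb * (1 - g ^+ M) = sb * c j - c j * sb * g ^+ M by ring.
  rewrite gerBl; apply: mulr_ge0; first by apply: mulr_ge0; apply: ltW.
  by apply: exprn_ge0; apply: ltW.
apply: le_trans (lerD S4 S5) _.
by rewrite gE -mulrDl subrK mul1r.
Qed.
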